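(* Let $f:\mathbb{R}^2\to\mathbb{R}^2$ be a Topologically Anosov homeomorphism and $z_0\in\mathrm{Fix}(f)$. If there exists $x\neq z_0$ with $\alpha(x)=\omega(x)=\{z_0\}$, then there exist $y_0\neq z_0$ and $z\in\mathbb{R}^2$ such that $y_0\in\omega(z)$.
   Context: A homeomorphism $f:\mathbb{R}^2\to\mathbb{R}^2$ is Topologically Anosov (TA) if: (i) there is a continuous strictly positive $\epsilon:\mathbb{R}^2\to\mathbb{R}$ such that for all $x\neq y$ there is $k\in\mathbb{Z}$ with $\|f^k(x)-f^k(y)\|>\epsilon(f^k(x))$; and (ii) for every continuous strictly positive $\epsilon$ there is a continuous strictly positive $\delta$ such that every $\delta$-pseudo-orbit is $\epsilon$-shadowed by an orbit. A $\delta$-pseudo-orbit is a sequence $(x_n)_{n\in\mathbb{Z}}$ with $\|f(x_n)-x_{n+1}\|<\delta(f(x_n))$; it is $\epsilon$-shadowed by the orbit of $x$ if $\|x_n-f^n(x)\|<\epsilon(x_n)$ for all $n$. $\alpha(x),\omega(x)$ are the $\alpha$- and $\omega$-limit sets. *)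

(* Defs.v *)
From Stdlib Require Import Reals ZArith.
Open Scope R_scope.

Definition pt : Type := (R * R)%type.

Definition dist2 (p q : pt) : R :=
  sqrt ((fst p - fst q) ^ 2 + (snd p - snd q) ^ 2).

Definition cont_map (h : pt -> pt) : Prop :=
  forall x eps, 0 < eps -> exists d, 0 < d /\
    forall y, dist2 x y < d -> dist2 (h x) (h y) < eps.

Definition cont_fun (e : pt -> R) : Prop :=
  forall x eps, 0 < eps -> exists d, 0 < d /\
    forall y, dist2 x y < d -> Rabs (e x - e y) < eps.

Definition pos_cont (e : pt -> R) : Prop := cont_fun e /\ forall x, 0 < e x.

Definition homeo (f g : pt -> pt) : Prop :=
  cont_map f /\ cont_map g /\ (forall x, g (f x) = x) /\ (forall x, f (g x) = x).

Definition iterZ (f g : pt -> pt) (k : Z) (x : pt) : pt :=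
  match k with
  | Z0 => x
  | Zpos n => Nat.iter (Pos.to_nat n) f x
  | Zneg n => Nat.iter (Pos.to_nat n) g x
  end.

Definition pseudo_orbit (f : pt -> pt) (delta : pt -> R) (xs : Z -> pt) : Prop :=
  forall n : Z, dist2 (f (xs n)) (xs (n + 1)%Z) < delta (f (xs n)).

Definition shadows (f g : pt -> pt) (eps : pt -> R) (xs : Z -> pt) (x : pt) : Prop :=
  forall n : Z, dist2 (xs n) (iterZ f g n x) < eps (xs n).

Definition TA (f g : pt -> pt) : Prop :=
  homeo f g /\
  (exists eps, pos_cont eps /\
     forall x y, x <> y -> exists k : Z,
       dist2 (iterZ f g k x) (iterZ f g k y) > eps (iterZ f g k x)) /\
  (forall eps, pos_cont eps -> exists delta, pos_cont delta /\
     forall xs, pseudo_orbit f delta xs -> exists x, shadows f g eps xs x).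

Definition in_omega (f : pt -> pt) (x y : pt) : Prop :=
  forall eps, 0 < eps -> forall N : nat, exists n : nat,
    (N <= n)%nat /\ dist2 (Nat.iter n f x) y < eps.

Definition in_alpha (g : pt -> pt) (x y : pt) : Prop := in_omega g x y.

(* Main.v *)
Require Import Defs.
From Stdlib Require Import Reals ZArith.
From Stdlib Require Import Lia Lra ClassicalEpsilon.
Open Scope R_scope.

Lemma Rabs_le_between a b : Rabs a <= b -> -b <= a <= b.
Proof. unfold Rabs; destruct (Rcase_abs a); intros; lra. Qed.

Lemma ValAdh_lt un l : ValAdh un l -> forall e, 0 < e -> forall N, exists p, (N <= p)%nat /\ Rabs (un p - l) < e.
Proof.
  intros H e He N. destruct (H (fun y => Rabs (y - l) < e) N) as [p Hp].
  - exists (mkposreal e He). intros y Hy. exact Hy.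
  - exists p; exact Hp.
Qed.

Lemma BW1 (un : nat -> R) a c : (forall n, Rabs (un n - a) <= c) ->
  exists l, Rabs (l - a) <= c /\ forall e, 0 < e -> forall N, exists p, (N <= p)%nat /\ Rabs (un p - l) < e.
Proof.
  intros H. destruct (Bolzano_Weierstrass un (fun y => a - c <= y <= a + c) (compact_P3 _ _)) as [l Hl].
  { intros n. specialize (H n). apply Rabs_le_between in H. lra. }
  pose proof (ValAdh_lt _ _ Hl) as Hl'. exists l. split; [|exact Hl'].
  apply Rabs_le. destruct (Rle_dec (-c) (l-a)); destruct (Rle_dec (l-a) c); try (split; lra).
  - destruct (Hl' (l - a - c) ltac:(lra) 0%nat) as [p [_ Hp]]. specialize (H p).
    apply Rabs_le_between in H. apply Rabs_def2 in Hp. lra.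
  - destruct (Hl' (a - c - l) ltac:(lra) 0%nat) as [p [_ Hp]]. specialize (H p).
    apply Rabs_le_between in H. apply Rabs_def2 in Hp. lra.
  - pose proof (Rabs_pos (un 0%nat - a)). specialize (H 0%nat). lra.
Qed.

Lemma BW2 (u : nat -> pt) (x : pt) c :
  (forall k, Rabs (fst (u k) - fst x) <= c /\ Rabs (snd (u k) - snd x) <= c) ->
  exists y, Rabs (fst y - fst x) <= c /\ Rabs (snd y - snd x) <= c /\
   forall e, 0 < e -> forall N, exists k, (N <= k)%nat /\
     Rabs (fst (u k) - fst y) < e /\ Rabs (snd (u k) - snd y) < e.
Proof.
  intros H.
  destruct (BW1 (fun k => fst (u k)) (fst x) c (fun k => proj1 (H k))) as [l1 [Hl1 H1]].
  assert (Hp : forall m : nat, exists p, (m <= p)%nat /\ Rabs (fst (u p) - l1) < / (INR m + 1)).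
  { intros m. apply H1. apply Rinv_0_lt_compat. pose proof (pos_INR m). lra. }
  set (pm := fun m => proj1_sig (constructive_indefinite_description _ (Hp m))).
  assert (Hpm : forall m, (m <= pm m)%nat /\ Rabs (fst (u (pm m)) - l1) < / (INR m + 1)).
  { intros m. unfold pm. destruct (constructive_indefinite_description _ (Hp m)) as [p Hp']. exact Hp'. }
  destruct (BW1 (fun m => snd (u (pm m))) (snd x) c (fun m => proj2 (H (pm m)))) as [l2 [Hl2 H2]].
  exists (l1, l2). simpl. split; [exact Hl1|]. split; [exact Hl2|].
  intros e He N. destruct (archimed_cor1 e He) as [K [HK HK0]].
  destruct (H2 e He (Nat.max N K)) as [m [Hm Hm2]].
  destruct (Hpm m) as [Hm1 Hm3]. exists (pm m). split; [lia|]. split; [|exact Hm2].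
  eapply Rlt_trans; [exact Hm3|]. eapply Rle_lt_trans; [|exact HK].
  apply Rlt_le. apply Rinv_lt_contravar.
  - apply Rmult_lt_0_compat; [apply lt_0_INR; lia| pose proof (pos_INR m); lra].
  - assert (INR K <= INR m) by (apply le_INR; lia). lra.
Qed.

Lemma dist_le_abs p q : dist2 p q <= Rabs (fst p - fst q) + Rabs (snd p - snd q).
Proof.
  unfold dist2. rewrite <- (sqrt_Rsqr (Rabs (fst p - fst q) + Rabs (snd p - snd q)))
    by (pose proof (Rabs_pos (fst p - fst q)); pose proof (Rabs_pos (snd p - snd q)); lra).
  apply sqrt_le_1_alt. unfold Rsqr.
  pose proof (Rabs_pos (fst p - fst q)); pose proof (Rabs_pos (snd p - snd q)).
  rewrite <- (pow2_abs (fst p - fst q)), <- (pow2_abs (snd p - snd q)).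
  nra.
Qed.

Lemma abs_le_dist p q : Rabs (fst p - fst q) <= dist2 p q /\ Rabs (snd p - snd q) <= dist2 p q.
Proof.
  unfold dist2. split.
  - rewrite <- sqrt_Rsqr_abs. apply sqrt_le_1_alt. rewrite Rsqr_pow2.
    pose proof (pow2_ge_0 (snd p - snd q)). lra.
  - rewrite <- sqrt_Rsqr_abs. apply sqrt_le_1_alt. rewrite Rsqr_pow2.
    pose proof (pow2_ge_0 (fst p - fst q)). lra.
Qed.

Lemma dist_refl p : dist2 p p = 0.
Proof. unfold dist2. replace ((fst p - fst p) ^ 2 + (snd p - snd p) ^ 2) with 0 by ring. apply sqrt_0. Qed.

Lemma dist_sym p q : dist2 p q = dist2 q p.
Proof. unfold dist2. f_equal. ring. Qed.

Lemma dist_pos p q : p <> q -> 0 < dist2 p q.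
Proof.
  intros H. unfold dist2. apply sqrt_lt_R0.
  destruct p as [a b], q as [c d]; simpl.
  destruct (Rle_or_lt ((a - c) ^ 2 + (b - d) ^ 2) 0) as [Hle|Hlt]; [exfalso|exact Hlt].
  pose proof (pow2_ge_0 (a - c)). pose proof (pow2_ge_0 (b - d)).
  assert (E1 : (a - c) ^ 2 = 0) by lra. assert (E2 : (b - d) ^ 2 = 0) by lra.
  destruct (Req_dec (a - c) 0) as [F1|F1]; [|exact (pow_nonzero _ 2 F1 E1)].
  destruct (Req_dec (b - d) 0) as [F2|F2]; [|exact (pow_nonzero _ 2 F2 E2)].
  apply H. f_equal; lra.
Qed.

Lemma iterZ_nat f g n x : iterZ f g (Z.of_nat n) x = Nat.iter n f x.
Proof. destruct n; [reflexivity|]. simpl. rewrite SuccNat2Pos.id_succ. reflexivity. Qed.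

Lemma iterZ_negnat f g n x : iterZ f g (- Z.of_nat n) x = Nat.iter n g x.
Proof. destruct n; [reflexivity|]. simpl. rewrite SuccNat2Pos.id_succ. reflexivity. Qed.

Lemma iterZ_succ f g x m : (forall y, f (g y) = y) -> iterZ f g (m + 1) x = f (iterZ f g m x).
Proof.
  intros Hfg.
  destruct (Z_le_gt_dec 0 m) as [Hm|Hm].
  - replace m with (Z.of_nat (Z.to_nat m)) by lia.
    replace (Z.of_nat (Z.to_nat m) + 1)%Z with (Z.of_nat (S (Z.to_nat m))) by lia.
    rewrite !iterZ_nat. reflexivity.
  - replace m with (- Z.of_nat (S (Z.to_nat (- m - 1))))%Z by lia.
    replace (- Z.of_nat (S (Z.to_nat (- m - 1))) + 1)%Z with (- Z.of_nat (Z.to_nat (- m - 1)))%Z by lia.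
    rewrite !iterZ_negnat. simpl. rewrite Hfg. reflexivity.
Qed.

Theorem mainTheorem12 (f g : pt -> pt) (z0 : pt) :
  TA f g -> f z0 = z0 ->
  (exists x, x <> z0 /\
     (forall y, in_alpha g x y <-> y = z0) /\
     (forall y, in_omega f x y <-> y = z0)) ->
  exists y0 z, y0 <> z0 /\ in_omega f z y0.
Proof.
  intros [[_ [_ [Hgf Hfg]]] [_ Hsh]] _ [x [Hxz [Ha Ho]]].
  pose proof (dist_pos _ _ Hxz) as Dpos.
  set (c := dist2 x z0 / 4).
  assert (Hc : 0 < c) by (unfold c; lra).
  destruct (Hsh (fun _ => c)) as [delta [[Hdc Hdp] Hdel]].
  { split; [|intros; exact Hc]. intros p e He. exists 1. split; [lra|].
    intros. rewrite Rminus_diag, Rabs_R0. exact He. }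
  set (d0 := delta z0). assert (Hd0 : 0 < d0) by apply Hdp.
  destruct (Hdc z0 (d0 / 2) ltac:(lra)) as [r [Hr Hrd]].
  assert (HoB := proj2 (Ho z0) eq_refl (Rmin r (d0 / 8)) ltac:(apply Rmin_pos; lra) 1%nat).
  destruct HoB as [B [HB1 HB2]].
  assert (HaA := proj2 (Ha z0) eq_refl (d0 / 8) ltac:(lra) 0%nat).
  destruct HaA as [A [_ HA2]].
  set (fB := Nat.iter B f x) in *. set (gA := Nat.iter A g x) in *.
  assert (Hjump : dist2 fB gA < delta fB).
  { assert (h1 : dist2 z0 fB < r) by (rewrite dist_sym; eapply Rlt_le_trans; [exact HB2| apply Rmin_l]).
    specialize (Hrd fB h1). apply Rabs_def2 in Hrd.
    assert (HB3 : dist2 fB z0 < d0 / 8) by (eapply Rlt_le_trans; [exact HB2| apply Rmin_r]).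
    pose proof (dist_le_abs fB gA).
    pose proof (abs_le_dist fB z0). pose proof (abs_le_dist gA z0).
    pose proof (Rabs_triang (fst fB - fst z0) (fst z0 - fst gA)) as T1.
    pose proof (Rabs_triang (snd fB - snd z0) (snd z0 - snd gA)) as T2.
    replace (fst fB - fst z0 + (fst z0 - fst gA)) with (fst fB - fst gA) in T1 by ring.
    replace (snd fB - snd z0 + (snd z0 - snd gA)) with (snd fB - snd gA) in T2 by ring.
    rewrite (Rabs_minus_sym (fst z0)) in T1. rewrite (Rabs_minus_sym (snd z0)) in T2.
    fold d0 in Hrd. lra. }
  set (Pz := Z.of_nat (A + B)).
  assert (HPz : (0 < Pz)%Z) by (unfold Pz; lia).
  set (xs := fun n : Z => iterZ f g (n mod Pz - Z.of_nat A) x).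
  assert (Hpo : pseudo_orbit f delta xs).
  { intros n. unfold xs.
    pose proof (Z.mod_pos_bound n Pz HPz) as Hrb.
    rewrite <- Z.add_mod_idemp_l by lia.
    destruct (Z.eq_dec (n mod Pz + 1) Pz) as [Heq|Hne].
    - rewrite Heq, Z.mod_same by lia.
      replace (n mod Pz - Z.of_nat A)%Z with (Z.of_nat B - 1)%Z by (unfold Pz in *; lia).
      rewrite <- iterZ_succ by exact Hfg. rewrite Z.sub_add, iterZ_nat.
      replace (0 - Z.of_nat A)%Z with (- Z.of_nat A)%Z by lia. rewrite iterZ_negnat.
      exact Hjump.
    - rewrite (Z.mod_small (n mod Pz + 1) Pz) by lia.
      replace (n mod Pz + 1 - Z.of_nat A)%Z with ((n mod Pz - Z.of_nat A) + 1)%Z by lia.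
      rewrite iterZ_succ by exact Hfg. rewrite dist_refl. apply Hdp. }
  destruct (Hdel xs Hpo) as [z Hz].
  set (u := fun k : nat => Nat.iter (k * (A + B) + A) f z).
  assert (Hu : forall k, dist2 x (u k) < c).
  { intros k. specialize (Hz (Z.of_nat (k * (A + B) + A))). unfold xs in Hz.
    rewrite iterZ_nat in Hz.
    replace (Z.of_nat (k * (A + B) + A) mod Pz)%Z with (Z.of_nat A) in Hz.
    - rewrite Z.sub_diag in Hz. exact Hz.
    - unfold Pz. rewrite Nat2Z.inj_add, Nat2Z.inj_mul, Z.add_comm, Z_mod_plus_full.
      rewrite Z.mod_small by lia. reflexivity. }
  destruct (BW2 u x c) as [y [Hy1 [Hy2 Hy3]]].
  { intros k. specialize (Hu k). destruct (abs_le_dist (u k) x) as [h1 h2].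
    rewrite dist_sym in Hu. lra. }
  exists y, z. split.
  - intros ->. pose proof (dist_le_abs x z0).
    rewrite (Rabs_minus_sym (fst x)), (Rabs_minus_sym (snd x)) in H. unfold c in *. lra.
  - intros e He N. destruct (Hy3 (e / 2) ltac:(lra) N) as [k [Hk [Hk1 Hk2]]].
    exists (k * (A + B) + A)%nat. split; [nia|].
    pose proof (dist_le_abs (u k) y). unfold u in *. lra.
Qed.
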